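(* Let $g=(U,v)\in\mathrm{Aff}(n,\mathbb{C})$ where $U\in\mathrm{GL}(n,\mathbb{C})$ is unipotent (all eigenvalues equal to $1$) and $v\in\mathbb{C}^n$ is arbitrary. Then $g$ is strongly $c$-reversible; in particular $g$ is a product of two coninvolutions in $\mathrm{Aff}(n,\mathbb{C})$.
   Context: $\mathrm{Aff}(n,\mathbb{C})$ is the group of affine maps $z\mapsto Az+v$, written $(A,v)$, with product $(A,v)(B,w)=(AB,Aw+v)$ and identity $e=(I_n,0)$. For $g=(A,v)$ set $\overline{g}=(\overline{A},\overline{v})$. An element $h$ is a coninvolution if $h\overline{h}=e$; $g$ is strongly $c$-reversible if there is a coninvolution $h$ with $hgh^{-1}=\overline{g}^{-1}$. *)

(* Defs.v *)
(* The complex numbers are modelled as R[i] = complex R for an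
   arbitrary R : realType (any such R is the real field, so R[i] is C). *)
From HB Require Import structures.
From mathcomp Require Import all_boot all_order all_algebra.
From mathcomp Require Import complex.
From mathcomp Require Import reals.
Set Implicit Arguments. Unset Strict Implicit. Unset Printing Implicit Defensive.
Import Order.TTheory GRing.Theory Num.Theory.
Local Open Scope ring_scope.

Section Affine.
Variables (R : realType) (n : nat).
Local Notation C := R[i].

(* An element (A, v) of Aff(n,C) acts as z |-> A z + v. *)
Definition aff := ('M[C]_n * 'cV[C]_n)%type.

Definition in_Aff (g : aff) : Prop := g.1 \in unitmx.

Definition aff_mul (g h : aff) : aff := (g.1 *m h.1, g.1 *m h.2 + g.2).
Definition aff_one : aff := (1%:M, 0).
Definition aff_inv (g : aff) : aff := (invmx g.1, - (invmx g.1 *m g.2)).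
Definition aff_bar (g : aff) : aff := (map_mx (@conjc R) g.1, map_mx (@conjc R) g.2).

Definition coninvolution (h : aff) : Prop :=
  in_Aff h /\ aff_mul h (aff_bar h) = aff_one.

Definition strongly_c_reversible (g : aff) : Prop :=
  exists h : aff, coninvolution h /\
    aff_mul (aff_mul h g) (aff_inv h) = aff_inv (aff_bar g).

Definition unipotent (U : 'M[C]_n) : Prop :=
  forall a : C, eigenvalue U a -> a = 1.
End Affine.

(* Main.v *)
Require Import Defs.
From HB Require Import structures.
From mathcomp Require Import all_boot all_order all_algebra.
From mathcomp Require Import complex.
From mathcomp Require Import reals.
From mathcomp Require Import zify.
Import Order.TTheory GRing.Theory Num.Theory.
Local Open Scope ring_scope.
Set Implicit Arguments. Unset Strict Implicit. Unset Printing Implicit Defensive.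
Definition is01 (F : fieldType) m n (A : 'M[F]_(m,n)) :=
  forall i j, A i j = 0 \/ A i j = 1.

Lemma unit_of_ker (F : fieldType) m (A : 'M[F]_m) :
  (forall v : 'rV_m, v *m A = 0 -> v = 0) -> A \in unitmx.
Proof. by move=> H; rewrite -row_free_unit; apply: inj_row_free. Qed.

Lemma mul_entry (F : fieldType) p q r (A : 'M[F]_(p, q)) (B : 'M_(q, r)) i j :
  (A *m B) i j = (row i A *m col j B) 0 0.
Proof. by rewrite !mxE; apply: eq_bigr => l _; rewrite !mxE. Qed.

Definition Xm (F : fieldType) m k (Z : 'M[F]_m) (x : 'rV_m) : 'M_(k, m) :=
  \matrix_(a < k) (x *m Z ^+ a).
Definition Km (F : fieldType) m k (Z : 'M[F]_m) (c : 'cV_m) : 'M_(m, k) :=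
  \matrix_(r < m, b < k) (Z ^+ b *m c) r 0.
Definition Lm (F : fieldType) k : 'M[F]_k := \matrix_(a, b) ((b : nat) == a.+1)%:R.

Lemma mulK_entry (F : fieldType) m k p (Z : 'M[F]_m) c (V : 'M_(p, m)) r (b : 'I_k) :
  (V *m Km k Z c) r b = (V *m (Z ^+ b *m c)) r 0.
Proof. by rewrite !mxE; apply: eq_bigr => l _; rewrite !mxE. Qed.

Lemma exprZ0 (F : fieldType) m (Z : 'M[F]_m) k a : Z ^+ k = 0 -> (k <= a)%N -> Z ^+ a = 0.
Proof. by move=> Zk ka; rewrite -(subnKC ka) exprD Zk mul0r. Qed.

Lemma P_entry (F : fieldType) m k (Z : 'M[F]_m) x c (a b : 'I_k) :
  (Xm k Z x *m Km k Z c) a b = (x *m Z ^+ (a + b) *m c) 0 0.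
Proof.
rewrite mulK_entry mul_entry rowK col_id exprD -mulmxE !mulmxA.
by [].
Qed.

Lemma P_zero (F : fieldType) m k' (Z : 'M[F]_m) x c (a b : 'I_k'.+1) :
  Z ^+ k'.+1 = 0 -> (k'.+1 <= a + b)%N -> (Xm k'.+1 Z x *m Km k'.+1 Z c) a b = 0.
Proof. by move=> Zk h; rewrite P_entry (exprZ0 Zk h) mulmx0 mul0mx mxE. Qed.

Lemma P_one (F : fieldType) m k' (Z : 'M[F]_m) x c (a b : 'I_k'.+1) :
  (x *m Z ^+ k' *m c) 0 0 = 1 -> (a + b)%N = k' -> (Xm k'.+1 Z x *m Km k'.+1 Z c) a b = 1.
Proof. by move=> Hs h; rewrite P_entry h. Qed.

Lemma P_unit (F : fieldType) m k' (Z : 'M[F]_m) (x : 'rV_m) (c : 'cV_m) :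
  Z ^+ k'.+1 = 0 -> (x *m Z ^+ k' *m c) 0 0 = 1 ->
  (Xm k'.+1 Z x *m Km k'.+1 Z c) \in unitmx.
Proof.
move=> Zk Hs; apply: unit_of_ker => d dP.
have H : forall t (a : 'I_k'.+1), (a < t)%N -> d 0 a = 0.
  elim=> [//|t IH] a; rewrite ltnS leq_eqVlt => /orP[/eqP ea|/IH//].
  have hb : (k' - a < k'.+1)%N by lia.
  have := congr1 (fun M : 'rV_k'.+1 => M 0 (Ordinal hb)) dP.
  rewrite !mxE (bigD1 a) //= [X in _ + X]big1; last first.
    move=> a2 ne; case: (ltngtP a2 a) => h.
    - by rewrite IH ?mul0r //; rewrite -ea.
    - by rewrite P_zero ?mulr0 //=; have := ltn_ord a; lia.
    - by move: ne; rewrite (val_inj h) eqxx.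
  rewrite P_one //=; last by have := ltn_ord a; lia.
  by rewrite mulr1 addr0.
by apply/rowP => a; rewrite mxE (H k'.+1).
Qed.

Lemma XZ_L (F : fieldType) m k (Z : 'M[F]_m) x :
  Z ^+ k = 0 -> Xm k Z x *m Z = Lm F k *m Xm k Z x.
Proof.
move=> Zk; apply/row_matrixP => a.
rewrite !row_mul rowK -mulmxA mulmxE -exprSr [RHS]mulmx_sum_row.
have [h|h] := ltnP a.+1 k.
  rewrite (bigD1 (Ordinal h)) //= big1 ?addr0.
    rewrite !mxE /= eqxx scale1r rowK. reflexivity.
  move=> b nb; rewrite !mxE; case: eqP => [e|_]; last by rewrite scale0r.
  by case/eqP: nb; apply: val_inj.
rewrite big1; first by rewrite (exprZ0 Zk h) mulmx0.
move=> b _; rewrite !mxE; case: eqP => [e|_]; last by rewrite scale0r.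
by have := ltn_ord b; lia.
Qed.

Lemma ker_inv (F : fieldType) m k p (Z : 'M[F]_m) c (V : 'M_(p, m)) :
  Z ^+ k = 0 -> V *m Km k Z c = 0 -> V *m Z *m Km k Z c = 0.
Proof.
move=> Zk VK; apply/matrixP => r b; rewrite mulK_entry [RHS]mxE.
rewrite -mulmxA [Z *m _]mulmxA mulmxE -exprS.
have [h|h] := ltnP b.+1 k.
  by move: VK => /matrixP/(_ r (Ordinal h)); rewrite mulK_entry !mxE.
by rewrite (exprZ0 Zk h) mul0mx mulmx0 mxE.
Qed.

Lemma k_le (F : fieldType) m k' (Z : 'M[F]_m) (x : 'rV_m) (c : 'cV_m) :
  Z ^+ k'.+1 = 0 -> (x *m Z ^+ k' *m c) 0 0 = 1 -> (k'.+1 <= m)%N.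
Proof.
move=> Zk Hs; have := mxrankM_maxl (Xm k'.+1 Z x) (Km k'.+1 Z c).
rewrite mxrank_unit ?P_unit // => h; exact: leq_trans h (rank_leq_col _).
Qed.

Lemma rank_K (F : fieldType) m k' (Z : 'M[F]_m) (x : 'rV_m) (c : 'cV_m) :
  Z ^+ k'.+1 = 0 -> (x *m Z ^+ k' *m c) 0 0 = 1 -> \rank (Km k'.+1 Z c) = k'.+1.
Proof.
move=> Zk Hs; apply/eqP; rewrite eqn_leq rank_leq_col /=.
rewrite -{1}(mxrank_unit (P_unit Zk Hs)); exact: mxrankM_maxr.
Qed.

Lemma full_XK (F : fieldType) m k' (Z : 'M[F]_m) (x : 'rV_m) (c : 'cV_m) :
  Z ^+ k'.+1 = 0 -> (x *m Z ^+ k' *m c) 0 0 = 1 ->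
  (1%:M <= Xm k'.+1 Z x + kermx (Km k'.+1 Z c))%MS.
Proof.
move=> Zk Hs; set X := Xm k'.+1 Z x; set K := Km k'.+1 Z c.
have Pu : (X *m K) \in unitmx by exact: P_unit.
have -> : 1%:M = K *m invmx (X *m K) *m X + (1%:M - K *m invmx (X *m K) *m X).
  by rewrite addrC subrK.
apply: addmx_sub_adds; first exact: submxMl.
by rewrite sub_kermx mulmxBl mul1mx -!mulmxA mulVmx // mulmx1 subrr.
Qed.

Lemma entry_subZ (F : fieldType) p q (A B : 'M[F]_(p,q)) a i j :
  (A - a *: B) i j = A i j - a * B i j.
Proof. by rewrite !mxE. Qed.

Lemma g_decomp (F : fieldType) m k' (Z : 'M[F]_m) (x : 'rV_m) (c : 'cV_m) (g : 'rV_m) :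
  Z ^+ k'.+1 = 0 -> (x *m Z ^+ k' *m c) 0 0 = 1 -> g *m Z = 0 ->
  (g - (g *m c) 0 0 *: (x *m Z ^+ k')) *m Km k'.+1 Z c = 0.
Proof.
move=> Zk Hs gZ; apply/rowP => b; rewrite mulK_entry [RHS]mxE.
rewrite mulmxBl -scalemxAl entry_subZ.
case: b => [[|b] hb] /=.
  by rewrite expr0 mul1mx ?mulmxA Hs mulr1 subrr.
rewrite exprS -mulmxE !mulmxA gZ !mul0mx mxE.
rewrite -[x *m Z ^+ k' *m Z]mulmxA mulmxE -exprSr Zk mulmx0 !mul0mx.
by rewrite [X in _ * X]mxE mulr0 subrr.
Qed.

Lemma is01_block (F : fieldType) p q (A : 'M[F]_p) (D : 'M_q) :
  is01 A -> is01 D -> is01 (block_mx A 0 0 D).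
Proof.
move=> hA hD i j; rewrite -(splitK i) -(splitK j).
case: (split i) => a; case: (split j) => b /=;
  rewrite ?block_mxEul ?block_mxEur ?block_mxEdl ?block_mxEdr ?mxE; auto.
Qed.

Lemma is01_row (F : fieldType) p q (A : 'rV[F]_p) (D : 'rV_q) :
  is01 A -> is01 D -> is01 (row_mx A D).
Proof.
move=> hA hD i j; rewrite -(splitK j).
by case: (split j) => b /=; rewrite ?row_mxEl ?row_mxEr; auto.
Qed.

Lemma is01_L (F : fieldType) k : is01 (Lm F k).
Proof. by move=> i j; rewrite mxE; case: eqP; auto. Qed.

Lemma is01_delta (F : fieldType) p q i0 j0 : is01 (delta_mx i0 j0 : 'M[F]_(p, q)).
Proof. by move=> i j; rewrite mxE; case: (_ && _); auto. Qed.

Lemma is01_0 (F : fieldType) p q : is01 (0 : 'M[F]_(p, q)).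
Proof. by move=> i j; rewrite mxE; auto. Qed.

Lemma nil_form (F : fieldType) m (Z : 'M[F]_m) (g : 'rV_m) :
  (exists p, Z ^+ p = 0) -> g *m Z = 0 ->
  exists T : 'M_m, exists J : 'M_m, exists cc : 'rV_m,
    [/\ T \in unitmx, T *m Z = J *m T, g = cc *m T, is01 J & is01 cc].
Proof.
elim/ltn_ind: m Z g => m IH Z g [p Zp] gZ.
have [m0|mpos] := posnP m.
  subst m; exists 1%:M, 0, 0; split.
  - exact: unitmx1.
  - by rewrite [LHS]flatmx0 [RHS]flatmx0.
  - by rewrite [LHS]thinmx0 [RHS]thinmx0.
  - by move=> [].
  - by move=> ? [].
have [k' [Zk Zk']] : exists k', Z ^+ k'.+1 = 0 /\ Z ^+ k' != 0.
  have ex : exists q, Z ^+ q == 0 by exists p; apply/eqP.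
  case: (ex_minnP ex) => q /eqP Zq qmin.
  case: q Zq qmin => [|q] Zq qmin.
    exfalso; move/matrixP: Zq => /(_ (Ordinal mpos) (Ordinal mpos)).
    rewrite expr0 !mxE eqxx /= => /eqP; by rewrite oner_eq0.
  exists q; split => //; apply/negP => /eqP Zq'.
  by have := qmin q; rewrite Zq' eqxx => /(_ isT); rewrite ltnn.
have [x [c Hs]] : exists (x : 'rV_m) (c : 'cV_m), (x *m Z ^+ k' *m c) 0 0 = 1.
  have [i [j Zij]] : exists i j, (Z ^+ k') i j != 0.
    case: (pickP (fun ij : 'I_m * 'I_m => (Z ^+ k') ij.1 ij.2 != 0)) => [[i j] /= h|h].
      by exists i, j.
    case/eqP: Zk'; apply/matrixP => i j; move/negbFE: (h (i, j)) => /eqP ->.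
    by rewrite mxE.
  exists (delta_mx 0 i), (((Z ^+ k') i j)^-1 *: delta_mx j 0).
  by rewrite -rowE -scalemxAr -colE !mxE mulVf.
have kle := k_le Zk Hs.
have [m' em] : exists m', m = (k'.+1 + m')%N by exists (m - k'.+1)%N; rewrite subnKC.
subst m.
set X := Xm k'.+1 Z x; set K := Km k'.+1 Z c.
have erk : \rank (kermx K) = m' by rewrite mxrank_ker (rank_K Zk Hs) addKn.
pose B : 'M_(m', k'.+1 + m') := castmx (erk, erefl) (row_base (kermx K)).
have eB : (B :=: kermx K)%MS := eqmx_trans (eqmx_cast _ _) (eq_row_base _).
have Bfree : row_free B by rewrite /row_free eB erk.
have BZ : (B *m Z <= B)%MS.
  rewrite eB sub_kermx; apply/eqP; apply: ker_inv Zk _; apply/eqP.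
  by rewrite -sub_kermx -eB.
have [Z' BZ'] : exists Z', B *m Z = Z' *m B.
  by exists (B *m Z *m pinvmx B); rewrite mulmxKpV.
have BZq : forall q, B *m Z ^+ q = Z' ^+ q *m B.
  elim=> [|q IHq]; first by rewrite !expr0 mulmx1 mul1mx.
  by rewrite exprSr -mulmxE mulmxA IHq -mulmxA BZ' mulmxA mulmxE -exprSr.
have Z'k : Z' ^+ k'.+1 = 0.
  by apply: (row_free_inj Bfree); rewrite /= mul0mx -BZq Zk mulmx0.
pose a := (g *m c) 0 0.
pose gC := g - a *: (x *m Z ^+ k').
have gCB : (gC <= B)%MS by rewrite eB sub_kermx; apply/eqP; apply: g_decomp.
have [gam gamB] : exists gam, gam *m B = gC.
  by exists (gC *m pinvmx B); rewrite mulmxKpV.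
have gamZ : gam *m Z' = 0.
  apply: (row_free_inj Bfree); rewrite /= mul0mx -mulmxA -BZ' mulmxA gamB.
  rewrite mulmxBl gZ -scalemxAl -mulmxA mulmxE -exprSr Zk mulmx0 scaler0.
  by rewrite subr0.
have hm : (m' < k'.+1 + m')%N by lia.
have [S' [J' [eps [S'u S'Z gamS J'01 eps01]]]] :=
  IH m' hm Z' gam (ex_intro _ _ Z'k) gamZ.
have [a' [d [a'n0 d01 hd]]] : exists a' (d : 'rV_k'.+1),
    [/\ a' != 0, is01 d & d *m (a' *: X) = a *: (x *m Z ^+ k')].
  have [a0|an0] := eqVneq a 0.
    exists 1, 0; split; [exact: oner_neq0 | exact: is01_0 |].
    by rewrite mul0mx a0 scale0r.
  exists a, (delta_mx 0 ord_max); split => //; first exact: is01_delta.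
  by rewrite -scalemxAr -rowE rowK.
exists (col_mx (a' *: X) (S' *m B)), (block_mx (Lm F k'.+1) 0 0 J'),
  (row_mx d eps); split.
- rewrite -row_full_unit -sub1mx -addsmxE.
  rewrite (adds_eqmx (eqmx_scale _ a'n0) (eqmx_trans (eqmxMfull _ _) eB)).
    exact: full_XK.
  by rewrite row_full_unit.
- rewrite mul_col_mx mul_block_col !mul0mx addr0 add0r -scalemxAl XZ_L //.
  by rewrite scalemxAr -[S' *m B *m Z]mulmxA BZ' [S' *m (Z' *m B)]mulmxA S'Z mulmxA.
- rewrite mul_row_col hd mulmxA -gamS gamB /gC.
  by rewrite addrC subrK.
- by apply: is01_block => //; apply: is01_L.
- exact: is01_row.
Qed.

Lemma nil_eig (F : fieldType) m (W : 'M[F]_m) p (v : 'rV_m) c :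
  W ^+ p = 0 -> v *m W = c *: v -> c != 0 -> v = 0.
Proof.
move=> Wp vW c0.
have H : forall j, v *m W ^+ j = c ^+ j *: v.
  elim=> [|j IH]; first by rewrite expr0 mulmx1 scale1r.
  by rewrite exprSr -mulmxE mulmxA IH -scalemxAl vW scalerA -exprSr.
move: (H p); rewrite Wp mulmx0 => /esym/eqP; rewrite scaler_eq0 expf_eq0.
by rewrite (negbTE c0) andbF => /eqP.
Qed.

Lemma conj_i (R : realType) : conjc ('i : R[i]) = - 'i.
Proof. by apply/eqP; rewrite eq_complex /= oppr0 !eqxx. Qed.

Lemma mNii (R : realType) : - 'i * 'i = 1 :> R[i].
Proof. by rewrite mulNr -expr2 sqr_i opprK. Qed.

Notation cj := (map_mx (@conjc _)).

Lemma cjK (R : realType) p q (A : 'M[R[i]]_(p, q)) : cj (cj A) = A.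
Proof. by apply/matrixP => i j; rewrite !mxE conjcK. Qed.

Lemma cay_nil (R : realType) m (G : 'M[R[i]]_m) p :
  (G - 1%:M) ^+ p = 0 ->
  (G + 1%:M) \in unitmx /\ ((G - 1%:M) *m invmx (G + 1%:M)) ^+ p = 0.
Proof.
move=> Wp.
set W := G - 1%:M; set D := G + 1%:M.
have Du : D \in unitmx.
  apply: unit_of_ker => v vD; apply: (nil_eig (W := W) (c := - 2%:R) Wp).
    have -> : W = D - (1%:M + 1%:M) by rewrite /W /D opprD addrA addrK.
    by rewrite mulmxBr vD mulmxDr mulmx1 sub0r scaleNr scaler_nat mulr2n.
  by rewrite oppr_eq0 pnatr_eq0.
have DG : D *m G = G *m D by rewrite /D mulmxDl mulmxDr mul1mx mulmx1.
have iDG : invmx D *m G = G *m invmx D.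
  have : invmx D *m (D *m G) *m invmx D = invmx D *m (G *m D) *m invmx D.
    by rewrite DG.
  by rewrite mulKmx // !mulmxA mulmxK.
set X := W *m invmx D.
have WiD : W *m invmx D = invmx D *m W.
  by rewrite /W mulmxBl mulmxBr iDG mul1mx mulmx1.
have Xp : X ^+ p = 0.
  rewrite /X mulmxE exprMn_comm; first by rewrite Wp mul0r.
  by rewrite /GRing.comm -!mulmxE WiD.
by split.
Qed.

Lemma key (R : realType) m (G T J : 'M[R[i]]_m) p :
  (G - 1%:M) ^+ p = 0 -> T \in unitmx ->
  T *m ('i *: ((G - 1%:M) *m invmx (G + 1%:M))) = J *m T -> cj J = J ->
  forall H, H = invmx (cj T) *m T ->
  H *m cj H = 1%:M /\ cj G *m H *m G = H.
Proof.
move=> Wp Tu TXJ cJ H eH.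
set W := G - 1%:M; set D := G + 1%:M.
have Du : D \in unitmx.
  apply: unit_of_ker => v vD; apply: (nil_eig (W := W) (c := - 2%:R) Wp).
    have -> : W = D - (1%:M + 1%:M) by rewrite /W /D opprD addrA addrK.
    by rewrite mulmxBr vD mulmxDr mulmx1 sub0r scaleNr scaler_nat mulr2n.
  by rewrite oppr_eq0 pnatr_eq0.
have DG : D *m G = G *m D by rewrite /D mulmxDl mulmxDr mul1mx mulmx1.
have iDG : invmx D *m G = G *m invmx D.
  have : invmx D *m (D *m G) *m invmx D = invmx D *m (G *m D) *m invmx D.
    by rewrite DG.
  by rewrite mulKmx // !mulmxA mulmxK.
set X := W *m invmx D.
have WG : W *m G = G *m W by rewrite /W mulmxBl mulmxBr mul1mx mulmx1.
have XG : X *m G = G *m X by rewrite /X -mulmxA iDG !mulmxA WG.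
have XD : X *m D = W by rewrite /X mulmxKV.
have GX : G *m (1%:M - X) = 1%:M + X.
  have e : X *m G = W - X by rewrite -XD /D mulmxDr mulmx1 addrK.
  by rewrite mulmxBr mulmx1 -XG e /W opprB addrCA subKr addrC.
set K := (- 'i) *: J.
have TX : T *m X = K *m T.
  by rewrite /K -scalemxAl -TXJ scalemxAr scalerA mNii scale1r.
have cK : cj K = - K.
  rewrite /K map_mxZ cJ -scaleNr opprK; congr (_ *: J).
  by apply/eqP; rewrite eq_complex /= oppr0 opprK !eqxx.
have WiD : W *m invmx D = invmx D *m W.
  by rewrite /W mulmxBl mulmxBr iDG mul1mx mulmx1.
have Xp : X ^+ p = 0.
  rewrite /X mulmxE exprMn_comm; first by rewrite Wp mul0r.
  by rewrite /GRing.comm -!mulmxE WiD.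
have TXj : forall j, T *m X ^+ j = K ^+ j *m T.
  elim=> [|j IH]; first by rewrite !expr0 mulmx1 mul1mx.
  by rewrite !exprSr -!mulmxE mulmxA IH -mulmxA TX mulmxA.
have Kp : K ^+ p = 0.
  have := TXj p; rewrite Xp mulmx0 => /esym/(congr1 (mulmx^~ (invmx T))).
  by rewrite mulmxK // mul0mx.
set G0 := T *m G *m invmx T.
have G0K : G0 *m (1%:M - K) = 1%:M + K.
  have e1 : (1%:M - K) *m T = T *m (1%:M - X).
    by rewrite mulmxBl mulmxBr mul1mx mulmx1 TX.
  have : G0 *m (1%:M - K) *m T = (1%:M + K) *m T.
    rewrite -mulmxA e1 /G0 !mulmxA mulmxKV // -mulmxA GX mulmxDr mulmx1 TX.
    by rewrite mulmxDl mul1mx.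
  by move/(congr1 (mulmx^~ (invmx T))); rewrite !mulmxK.
have cG0K : cj G0 *m (1%:M + K) = 1%:M - K.
  have := congr1 cj G0K; rewrite map_mxM map_mxB map_mxD map_mx1 cK.
  by rewrite opprK.
have uK : (1%:M - K) \in unitmx.
  apply: unit_of_ker => v vK; apply: (nil_eig (W := K) (c := 1) Kp _ (oner_neq0 _)).
  by move: vK; rewrite mulmxBr mulmx1 scale1r => /eqP; rewrite subr_eq0 => /eqP <-.
have cGG : cj G0 *m G0 = 1%:M.
  have : cj G0 *m G0 *m (1%:M - K) = 1%:M *m (1%:M - K).
    by rewrite -mulmxA G0K cG0K mul1mx.
  by move/(congr1 (mulmx^~ (invmx (1%:M - K)))); rewrite !mulmxK.
have cTu : cj T \in unitmx by rewrite map_unitmx.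
have cH : cj H = invmx T *m cj T by rewrite eH map_mxM map_invmx cjK.
split.
  by rewrite cH eH mulmxA mulmxK // mulVmx.
have eG : G = invmx T *m G0 *m T.
  by rewrite /G0 !mulmxA mulVmx // mul1mx mulmxKV.
have ecG : cj G = invmx (cj T) *m cj G0 *m cj T.
  by rewrite {1}eG !map_mxM map_invmx.
have TG : T *m G = G0 *m T by rewrite /G0 mulmxKV.
rewrite ecG eG eH !mulmxA mulmxK // mulmxK // mulmxKV //.
rewrite -[_ *m T *m G]mulmxA TG mulmxA.
by rewrite -[invmx (cj T) *m cj G0 *m G0]mulmxA cGG mulmx1.
Qed.

Lemma unip_nil (R : realType) n (U : 'M[R[i]]_n) :
  unipotent U -> exists q, (U - 1%:M) ^+ q = 0.
Proof.
case: n U => [|n'] U Hu; first by exists 0%N; rewrite [LHS]flatmx0.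
set N := U - 1%:M.
have eN : forall a, eigenvalue N a -> a = 0.
  move=> a; rewrite /eigenvalue /eigenspace.
  have -> : N - a%:M = U - (1 + a)%:M by rewrite /N raddfD opprD addrA.
  by move=> /(Hu (1 + a)) /eqP; rewrite -subr_eq0 addrC addKr => /eqP.
have [r Hr] := closed_field_poly_normal (char_poly N).
rewrite (monicP (char_poly_monic N)) scale1r in Hr.
have r0 : forall z, z \in r -> z = 0.
  by move=> z zr; apply: eN; rewrite eigenvalue_root_char Hr root_prod_XsubC.
have Hp : \prod_(z <- r) ('X - z%:P) = 'X ^+ size r.
  elim: r r0 {Hr} => [|z r IH] r0; first by rewrite big_nil expr0.
  rewrite big_cons IH; last by move=> y yr; apply: r0; rewrite in_cons yr orbT.
  by rewrite (r0 z (mem_head _ _)) subr0 -exprS.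
exists (size r); have := Cayley_Hamilton N.
by rewrite Hr Hp rmorphXn /= horner_mx_X.
Qed.

Definition emb (R : realType) n (g : aff R n) : 'M[R[i]]_(1 + n) :=
  block_mx 1%:M 0 g.2 g.1.

Lemma emb_mul (R : realType) n (g h : aff R n) :
  emb (aff_mul g h) = emb g *m emb h.
Proof.
rewrite /emb mulmx_block ?mulmx0 ?mul0mx ?mulmx1 ?mul1mx ?addr0 ?add0r /=.
by rewrite addrC.
Qed.

Lemma emb_bar (R : realType) n (g : aff R n) : emb (aff_bar g) = cj (emb g).
Proof. by rewrite /emb map_block_mx map_mx1 map_mx0. Qed.

Lemma emb_one (R : realType) n : emb (aff_one R n) = 1%:M.
Proof. by rewrite /emb /= [RHS](scalar_mx_block 1 n). Qed.

Lemma emb_unit (R : realType) n (g : aff R n) : (emb g \in unitmx) = (g.1 \in unitmx).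
Proof. by rewrite !unitmxE /emb det_lblock det1 mul1r. Qed.

Lemma inv_right (F : fieldType) m (A B : 'M[F]_m) : A *m B = 1%:M -> B = invmx A.
Proof.
move=> e; have [Au _] := mulmx1_unit e.
by rewrite -[B]mul1mx -(mulVmx Au) -mulmxA e mulmx1.
Qed.

Lemma emb_inv (R : realType) n (g : aff R n) : g.1 \in unitmx ->
  emb (aff_inv g) = invmx (emb g).
Proof.
move=> gu; apply: inv_right; apply: mulmx1C; rewrite -emb_mul -emb_one.
congr emb; rewrite /aff_mul /aff_inv /aff_one /=.
by rewrite mulVmx // subrr.
Qed.

Lemma emb_inj (R : realType) n (g h : aff R n) : emb g = emb h -> g = h.
Proof.
case: g h => [A v] [B w] /= e.
have := congr1 drsubmx e; have := congr1 dlsubmx e.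
by rewrite /emb !block_mxKdr !block_mxKdl /= => -> ->.
Qed.

Lemma cj01 (R : realType) p q (A : 'M[R[i]]_(p, q)) : is01 A -> cj A = A.
Proof.
move=> h; apply/matrixP => i j; rewrite mxE.
by case: (h i j) => ->; [exact: conjc0 | exact: conjc1].
Qed.

Unset Implicit Arguments.

Theorem proposition3p6 (R : realType) (n : nat) (U : 'M[R[i]]_n) (v : 'cV[R[i]]_n) :
  U \in unitmx -> unipotent U ->
  strongly_c_reversible (U, v) /\
  (exists h1 h2 : aff R n, coninvolution h1 /\ coninvolution h2 /\
     (U, v) = aff_mul h1 h2).
Proof.
move=> Uu Uuni.
have [q Nq] := unip_nil Uuni.
pose g : aff R n := (U, v).
pose G := emb g.
have Gm1 : G - 1%:M = block_mx 0 0 v (U - 1%:M).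
  rewrite /G /emb [X in _ - X](scalar_mx_block 1 n 1) opp_block_mx add_block_mx /=.
  by rewrite !subrr subr0.
have Wp : (G - 1%:M) ^+ q.+1 = 0.
  have Wj : forall j, (G - 1%:M) ^+ j.+1 =
      block_mx 0 0 ((U - 1%:M) ^+ j *m v) ((U - 1%:M) ^+ j.+1).
    elim=> [|j IH]; first by rewrite expr1 expr0 mul1mx Gm1.
    rewrite exprSr IH Gm1 -mulmxE mulmx_block ?mulmx0 ?mul0mx ?addr0 ?add0r.
    by rewrite mulmxE -exprSr.
  by rewrite Wj exprSr Nq mul0r mul0mx block_mx0.
pose e0 : 'rV[R[i]]_(1 + n) := row_mx 1%:M 0.
have e0G : e0 *m G = e0.
  by rewrite /e0 /G /emb mul_row_block ?mulmx0 ?mul0mx ?mul1mx ?addr0.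
have e0W : e0 *m (G - 1%:M) = 0 by rewrite mulmxBr e0G mulmx1 subrr.
have [Du Xp] := cay_nil Wp.
pose Y := 'i *: ((G - 1%:M) *m invmx (G + 1%:M)).
have e0Y : e0 *m Y = 0 by rewrite /Y -scalemxAr mulmxA e0W mul0mx scaler0.
have Yp : Y ^+ q.+1 = 0 by rewrite /Y exprZn Xp scaler0.
have [T [J [cc [Tu TY e0T J01 cc01]]]] := nil_form (ex_intro _ _ Yp) e0Y.
pose H : 'M[R[i]]_(1 + n) := invmx (cj T) *m T.
have [HcH cGHG] := key Wp Tu TY (cj01 J01) (erefl H).
have cTu : cj T \in unitmx by rewrite map_unitmx.
have e0H : e0 *m H = e0.
  have ce0 : cj e0 = e0 by rewrite /e0 map_row_mx map_mx1 map_mx0.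
  have e0cT : e0 = cc *m cj T by rewrite -{1}ce0 e0T map_mxM (cj01 cc01).
  by rewrite /H mulmxA {1}e0cT mulmxK // -e0T.
clearbody H.
pose h : aff R n := (drsubmx H, dlsubmx H).
have eHb : H = emb h.
  have := e0H; rewrite -{1}(submxK H) /e0 mul_row_block ?mul0mx ?addr0 ?mul1mx.
  by move=> /eq_row_mx [ul ur]; rewrite /emb /= -{1}(submxK H) ul ur.
have Hu : H \in unitmx by have [] := mulmx1_unit HcH.
have hu : h.1 \in unitmx by rewrite -emb_unit -eHb.
have cGu : cj G \in unitmx by rewrite map_unitmx /G emb_unit.
have HGiH : H *m G *m invmx H = invmx (cj G).
  by apply: inv_right; rewrite !mulmxA cGHG mulmxV.
have cHH : cj H = invmx H by apply: inv_right.
have coh : coninvolution h.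
  split=> //; apply: emb_inj; by rewrite emb_mul emb_bar -eHb HcH emb_one.
split.
  exists h; split=> //; apply: emb_inj.
  rewrite !emb_mul emb_inv // -eHb emb_inv; last by rewrite /= map_unitmx.
  by rewrite emb_bar -/g -/G HGiH.
exists (aff_bar h), (aff_mul h g); split; [|split].
- split; first by rewrite /in_Aff /= map_unitmx.
  apply: emb_inj; rewrite emb_mul !emb_bar -eHb cjK emb_one.
  by apply: mulmx1C.
- split; first by rewrite /in_Aff /= unitmx_mul Uu hu.
  apply: emb_inj; rewrite emb_mul emb_bar !emb_mul -eHb -/g -/G emb_one.
  by rewrite map_mxM cHH !mulmxA HGiH mulVmx.
- apply: emb_inj; rewrite !emb_mul emb_bar -eHb -/g -/G.
  by rewrite mulmxA (mulmx1C HcH) mul1mx.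
Qed.
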